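(* Let $N,n,q\ge1$ and let $A\in\mathbb{R}^{n\times n}$, $B_v\in\mathbb{R}^{n\times q}$, $G\in\mathbb{R}^{q\times n}$, $B_u\in\mathbb{R}^{n\times1}$, $C\in\mathbb{R}^{1\times n}$. Let $M_0,\dots,M_{q-1}\in\mathbb{R}^{N\times N}$ be simultaneously diagonalized by an invertible $T$, i.e. $T^{-1}M_iT=\Lambda_i=\mathrm{diag}(\lambda_0(M_i),\dots,\lambda_{N-1}(M_i))$ for each $i$. For $i=0,\dots,q-1$ let $\Delta_i\in\mathbb{R}^{q\times q}$ be the matrix with $(i,i)$ entry $1$ and all other entries $0$, and let $M=\sum_{i=0}^{q-1}M_i\otimes\Delta_i\in\mathbb{R}^{Nq\times Nq}$. Then $(T\otimes I_q)^{-1}M(T\otimes I_q)=\sum_{i=0}^{q-1}\Lambda_i\otimes\Delta_i$ is diagonal. Moreover, consider the linear system $$\dot{\tilde x}=\big[(I_N\otimes A)+(I_N\otimes B_v)M(I_N\otimes G)\big]\tilde x+(I_N\otimes B_u)\tilde u,\qquad \tilde y=(I_N\otimes C)\tilde x,$$ with constant input $\tilde u\in\mathbb{R}^N$, and assume $A+\sum_{i=0}^{q-1}\lambda_k(M_i)B_v\Delta_iG$ is invertible for every $k$. Then the steady-state readout $\tilde y^*$ satisfies $T^{-1}\tilde y^*=S\,T^{-1}\tilde u$ where $S$ is diagonal with entries $$[S]_{kk}=-C\Big(A+\sum_{i=0}^{q-1}\lambda_k(M_i)B_v\Delta_iG\Big)^{-1}B_u,\qquad k=0,\dots,N-1.$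$
   Context: $\otimes$ denotes the Kronecker product, $I_m$ the $m\times m$ identity. This describes $N$ identical cells, each with $q$ coupling signals, where signal $i$ is transmitted between cells according to interconnection matrix $M_i$ (the system linearized about a homogeneous steady state). *)

(* Defs.v *)
(* Kronecker product = tensmx (A *t B) from mathcomp.real_closed.mxtens,
   with the standard ordering: (A *t B) (i1*p + i2) (j1*q + j2) = A i1 j1 * B i2 j2. *)
From HB Require Import structures.
From mathcomp Require Import all_boot all_order all_algebra.
From mathcomp Require Export mxtens.
Set Implicit Arguments. Unset Strict Implicit. Unset Printing Implicit Defensive.
Import Order.TTheory GRing.Theory Num.Theory.
Local Open Scope ring_scope.

(* Delta_i (the q x q matrix with (i,i) entry 1, zeros elsewhere) is written
   (delta_mx i i : 'M[R]_q) below. *)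

Definition Lam (R : nzRingType) (N : nat) (lam : 'I_N -> R) : 'M[R]_N :=
  diag_mx (\row_k lam k).

Definition bigM (R : nzRingType) (N q : nat) (Ms : 'I_q -> 'M[R]_N) : 'M[R]_(N * q) :=
  \sum_(i < q) (Ms i *t (delta_mx i i : 'M[R]_q)).

Definition sysJ (R : nzRingType) (N n q : nat) (A : 'M[R]_n) (Bv : 'M[R]_(n, q))
  (G : 'M[R]_(q, n)) (M : 'M[R]_(N * q)) : 'M[R]_(N * n) :=
  ((1%:M : 'M[R]_N) *t A) + ((1%:M : 'M[R]_N) *t Bv) *m M *m ((1%:M : 'M[R]_N) *t G).

Definition sysBu (R : nzRingType) (N n : nat) (Bu : 'M[R]_(n, 1)) : 'M[R]_(N * n, N) :=
  castmx (erefl (N * n)%N, muln1 N) ((1%:M : 'M[R]_N) *t Bu).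

Definition sysC (R : nzRingType) (N n : nat) (C : 'M[R]_(1, n)) : 'M[R]_(N, N * n) :=
  castmx (muln1 N, erefl (N * n)%N) ((1%:M : 'M[R]_N) *t C).

Definition steady_state (R : nzRingType) (m N : nat) (J : 'M[R]_m) (B : 'M[R]_(m, N))
  (u : 'cV[R]_N) (x : 'cV[R]_m) : Prop := J *m x + B *m u = 0.

(* Main.v *)
Require Import Defs.
From mathcomp Require Import all_boot all_order all_algebra.
From mathcomp Require Import mxtens.
Import Order.TTheory GRing.Theory Num.Theory.
Local Open Scope ring_scope.
Local Open Scope ring_scope.
Section H.
Variable R : fieldType.

Lemma tensmxDl m n p q (A B : 'M[R]_(m,n)) (C : 'M[R]_(p,q)) :
  (A + B) *t C = A *t C + B *t C.
Proof. by apply/matrixP=> i j; rewrite !mxE mulrDl. Qed.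

Lemma tensmxDr m n p q (A : 'M[R]_(m,n)) (B C : 'M[R]_(p,q)) :
  A *t (B + C) = A *t B + A *t C.
Proof. by apply/matrixP=> i j; rewrite !mxE mulrDr. Qed.

Lemma tensmxZl m n p q a (A : 'M[R]_(m,n)) (C : 'M[R]_(p,q)) :
  (a *: A) *t C = a *: (A *t C).
Proof. by apply/matrixP=> i j; rewrite !mxE mulrA. Qed.

Lemma tensmxZr m n p q a (A : 'M[R]_(m,n)) (C : 'M[R]_(p,q)) :
  A *t (a *: C) = a *: (A *t C).
Proof. by apply/matrixP=> i j; rewrite !mxE mulrCA. Qed.

Lemma tensmxNl m n p q (A : 'M[R]_(m,n)) (C : 'M[R]_(p,q)) :
  (- A) *t C = - (A *t C).
Proof. by apply/matrixP=> i j; rewrite !mxE mulNr. Qed.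

Lemma tensmxNr m n p q (A : 'M[R]_(m,n)) (C : 'M[R]_(p,q)) :
  A *t (- C) = - (A *t C).
Proof. by apply/matrixP=> i j; rewrite !mxE mulrN. Qed.

Lemma tens_suml m n p q I (r : seq I) (P : pred I) (F : I -> 'M[R]_(m,n)) (C : 'M[R]_(p,q)) :
  (\sum_(i <- r | P i) F i) *t C = \sum_(i <- r | P i) (F i *t C).
Proof.
apply: (big_morph (fun A => A *t C)) => [A B|]; first exact: tensmxDl.
exact: tens0mx.
Qed.

Lemma tens_sumr m n p q I (r : seq I) (P : pred I) (F : I -> 'M[R]_(p,q)) (C : 'M[R]_(m,n)) :
  C *t (\sum_(i <- r | P i) F i) = \sum_(i <- r | P i) (C *t F i).
Proof.
apply: (big_morph (fun A => C *t A)) => [A B|]; first exact: tensmxDr.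
exact: tensmx0.
Qed.

Lemma tens11 m n : (1%:M : 'M[R]_m) *t (1%:M : 'M[R]_n) = 1%:M.
Proof.
apply/matrixP=> i j.
case: (mxtens_indexP i)=> i1 i2; case: (mxtens_indexP j)=> j1 j2.
rewrite tensmxE !mxE -natrM mulnb; congr ((nat_of_bool _)%:R).
apply/andP/eqP => [[/eqP-> /eqP->]//|].
move/(congr1 (@mxtens_unindex m n)); rewrite !mxtens_indexK => -[-> ->].
by rewrite !eqxx.
Qed.

Lemma tens_inv m n (T : 'M[R]_m) : T \in unitmx ->
  invmx (T *t (1%:M : 'M[R]_n)) = invmx T *t 1%:M.
Proof.
move=> uT.
have H : (invmx T *t (1%:M : 'M[R]_n)) *m (T *t 1%:M) = 1%:M.
  by rewrite tensmx_mul mulVmx // mul1mx tens11.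
have [_ uTT] := mulmx1_unit H.
by rewrite -[RHS]mulmx1 -(mulmxV uTT) mulmxA H mul1mx.
Qed.

Lemma castK_mul N m (e : m = N) (K : 'M[R]_N) (P : 'M[R]_(m, 1)) :
  K *m castmx (e, erefl 1%N) P = castmx (e, erefl 1%N) (castmx (esym e, esym e) K *m P).
Proof. by case: N / e in K *; rewrite !castmx_id. Qed.

Lemma mul_tens1 N (K : 'M[R]_N) (P : 'M[R]_(N * 1, 1)) :
  K *m castmx (muln1 N, erefl 1%N) P = castmx (muln1 N, erefl 1%N) ((K *t (1%:M : 'M[R]_1)) *m P).
Proof. by rewrite castK_mul tens_mx_scalar scale1r. Qed.

Lemma one_sum_delta n : (1%:M : 'M[R]_n) = \sum_k delta_mx k k.
Proof.
by rewrite -diag_const_mx diag_mx_sum_delta; apply: eq_bigr => k _; rewrite mxE scale1r.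
Qed.

End H.
Lemma castmx_mull (R : fieldType) m k k' p (e : k = k') (A : 'M[R]_(m, k)) (B : 'M[R]_(k', p)) :
  castmx (erefl m, e) A *m B = A *m castmx (esym e, erefl p) B.
Proof. by case: k' / e in B *; rewrite !castmx_id. Qed.
Lemma tensmx_mulc (R : comPzRingType) m n p q
  (A : 'M[R]_(m,n)) (B : 'M[R]_(p,q)) (C : 'M[R]_(n,1)) (D : 'M[R]_(q,1)) :
  @mulmx _ (m * p) (n * q) 1 (A *t B) (C *t D) = (A *m C) *t (B *m D).
Proof. exact: (@tensmx_mul R m n p q 1 1 A B C D). Qed.
Lemma castmx_mulr (R : pzRingType) m m' k p (e : m = m') (A : 'M[R]_(m, k)) (B : 'M[R]_(k, p)) :
  castmx (e, erefl k) A *m B = castmx (e, erefl p) (A *m B).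
Proof. by case: m' / e; rewrite !castmx_id. Qed.
Theorem mainTheorem3 (R : realFieldType) (N n q : nat)
  (hN : (0 < N)%N) (hn : (0 < n)%N) (hq : (0 < q)%N)
  (A : 'M[R]_n) (Bv : 'M[R]_(n, q)) (G : 'M[R]_(q, n))
  (Bu : 'M[R]_(n, 1)) (C : 'M[R]_(1, n))
  (Ms : 'I_q -> 'M[R]_N) (T : 'M[R]_N) (lam : 'I_q -> 'I_N -> R) :
  T \in unitmx ->
  (forall i : 'I_q, invmx T *m Ms i *m T = Lam (lam i)) ->
  let M := bigM Ms in
  let TI := T *t (1%:M : 'M[R]_q) in
  (invmx TI *m M *m TI = \sum_(i < q) (Lam (lam i) *t (delta_mx i i : 'M[R]_q))
   /\ is_diag_mx (invmx TI *m M *m TI))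
  /\
  ((forall k : 'I_N,
      (A + \sum_(i < q) lam i k *: (Bv *m (delta_mx i i : 'M[R]_q) *m G)) \in unitmx) ->
   forall (u : 'cV[R]_N) (x : 'cV[R]_(N * n)),
     steady_state (sysJ A Bv G M) (sysBu N Bu) u x ->
     let S : 'M[R]_N := diag_mx (\row_k
        (- (C *m invmx (A + \sum_(i < q) lam i k *: (Bv *m (delta_mx i i : 'M[R]_q) *m G))
              *m Bu) 0 0)) in
     invmx T *m (sysC N C *m x) = S *m (invmx T *m u)).
Proof.
move=> uT HM M TI.
have E1 : invmx TI *m M *m TI = \sum_(i < q) (Lam (lam i) *t (delta_mx i i : 'M[R]_q)).
  rewrite /TI tens_inv // /M /bigM mulmx_sumr mulmx_suml; apply: eq_bigr => i _.
  by rewrite !tensmx_mul mul1mx mulmx1 HM.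
split.
  split=> //; rewrite E1; apply/is_diag_mxP => i j hij.
  rewrite summxE big1 // => k _.
  move: hij; case: (mxtens_indexP i)=> i1 i2; case: (mxtens_indexP j)=> j1 j2 hij.
  rewrite tensmxE /Lam !mxE.
  case: (eqVneq i1 j1) => [e1|ne1]; last by rewrite mulr0n mul0r.
  case: (eqVneq i2 j2) => [e2|ne2]; last first.
    have nk : ~~ ((i2 == k) && (j2 == k)) by apply: contra ne2 => /andP[/eqP-> /eqP->].
    by rewrite (negbTE nk) mulr0.
  by move: hij; rewrite e1 e2 eqxx.
move=> hA u x Hss S.
set v := invmx T *m u.
pose Ak k := A + \sum_(i < q) lam i k *: (Bv *m (delta_mx i i : 'M[R]_q) *m G).
pose Tn := T *t (1%:M : 'M[R]_n).
pose Qn := invmx T *t (1%:M : 'M[R]_n).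
have QT : Qn *m Tn = 1%:M by rewrite tensmx_mul mulVmx // mul1mx tens11.
have TQ : Tn *m Qn = 1%:M by rewrite tensmx_mul mulmxV // mul1mx tens11.
pose w := Qn *m x.
have xw : x = Tn *m w by rewrite /w mulmxA TQ mul1mx.
pose D := \sum_k ((delta_mx k k : 'M[R]_N) *t Ak k).
have HD : Qn *m sysJ A Bv G M *m Tn = D.
  rewrite /sysJ mulmxDr mulmxDl !tensmx_mul mulmx1 mul1mx mulVmx // mulmx1.
  have -> : Qn *m ((1%:M *t Bv) *m M *m (1%:M *t G)) *m Tn
      = (1%:M *t Bv) *m (invmx TI *m M *m TI) *m (1%:M *t G).
    rewrite /TI tens_inv // !mulmxA !tensmx_mul !mul1mx !mulmx1 -!mulmxA !tensmx_mul.
    by rewrite !mul1mx !mulmx1.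
  rewrite E1 mulmx_sumr mulmx_suml.
  under eq_bigr => i _ do rewrite !tensmx_mul mul1mx mulmx1 /Lam diag_mx_sum_delta tens_suml.
  rewrite exchange_big /= /D one_sum_delta tens_suml -big_split /=.
  apply: eq_bigr => k _; rewrite /Ak tensmxDr tens_sumr; congr (_ + _).
  by apply: eq_bigr => i _; rewrite mxE tensmxZl tensmxZr.
have HB : Qn *m (sysBu N Bu *m u) = v *t Bu.
  rewrite /sysBu castmx_mull.
  have -> : castmx (esym (muln1 N), erefl 1%N) u = u *t (1%:M : 'M[R]_1).
    rewrite tens_mx_scalar scale1r.
    by have -> : esym (muln1 1%N) = erefl 1%N by apply: eq_irrelevance.
  have := tensmx_mul (1%:M : 'M[R]_N) Bu u (1%:M : 'M[R]_1).
  rewrite mul1mx mulmx1 => ->.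
  by rewrite /Qn tensmx_mulc mul1mx.
have Hw : D *m w + v *t Bu = 0.
  by rewrite -HD -HB -!mulmxA -xw -mulmxDr Hss mulmx0.
pose Dinv := \sum_k ((delta_mx k k : 'M[R]_N) *t invmx (Ak k)).
have DD : Dinv *m D = 1%:M.
  rewrite /Dinv /D mulmx_suml -tens11 one_sum_delta tens_suml; apply: eq_bigr => k _.
  rewrite mulmx_sumr (bigD1 k) //= big1 ?addr0 => [|l hl].
    by rewrite tensmx_mul mul_delta_mx mulVmx // hA.
  by rewrite tensmx_mul mul_delta_mx_cond eq_sym (negbTE hl) mulr0n tens0mx.
have wE : w = - (Dinv *m (v *t Bu)).
  rewrite -[w]mul1mx -DD -mulmxA -mulmxN; congr (_ *m _).
  by apply/eqP; rewrite -addr_eq0 Hw.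
have HY : (1%:M *t C) *m w = (S *m v) *t (1%:M : 'M[R]_1).
  rewrite wE mulmxN /Dinv !mulmx_suml mulmx_sumr.
  rewrite /S diag_mx_sum_delta mulmx_suml tens_suml -sumrN; apply: eq_bigr => k _.
  rewrite !tensmx_mulc mul1mx mxE -scalemxAl tensmxZl.
  rewrite scaleNr mulmxA; congr (- _).
  by rewrite {1}[C *m _ *m Bu]mx11_scalar -scalemx1 tensmxZr.
rewrite /sysC castmx_mulr mul_tens1 mulmxA.
have -> : (invmx T *t (1%:M : 'M[R]_1)) *m (1%:M *t C) = (1%:M *t C) *m Qn.
  by rewrite /Qn !tensmx_mul !mul1mx !mulmx1.
rewrite -(mulmxA (1%:M *t C) Qn x) -/w HY tens_mx_scalar scale1r castmx_comp castmx_id.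
done.
Qed.
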